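(* Let $w\colon E\to(0,\infty)$ be a weight function on the edges of the hypercube graph satisfying $\sigma^*w=w$ for all permutations $\sigma$ of $N$. Then for every game $v$ on $N$ and every $i\in N$, $v_{i,w}(N)=\phi_i(v)$, where $v_{i,w}$ is the unique function with $v_{i,w}(\emptyset)=0$ and $\mathrm{d}v_{i,w}=P_w\mathrm{d}_iv$, and $$\phi_i(v)=\sum_{S\subset N\setminus\{i\}} \frac{|S|!\,(|N|-1-|S|)!}{|N|!}\bigl(v(S\cup\{i\})-v(S)\bigr)$$ is the Shapley value.
   Context: Let $N$ be a finite set of players. A game is a function $v\colon 2^N\to\mathbb{R}$ with $v(\emptyset)=0$. The hypercube graph $G=(V,E)$ has $V=2^N$ and oriented edges $E=\{(S,S\cup\{i\}) : i\in N,\ S\subset N\setminus\{i\}\}$. $\ell^2(V)$ is the space of real functions on $V$. Given $w\colon E\to(0,\infty)$, $\ell^2_w(E)$ is the space of real functions on $E$ with inner product $\langle f,g\rangle_w=\sum_{e\in E}w(e)f(e)g(e)$. $\mathrm{d}\colon \ell^2(V)\to\ell^2_w(E)$ is $\mathrm{d}u(S,S\cup\{i\}) = u(S\cup\{i\})-u(S)$, with range $\mathcal{R}(\mathrm{d})$. For $i\in N$, $\mathrm{d}_i\colon\ell^2(V)\to\ell^2_w(E)$ is defined by $\mathrm{d}_i u(S,S\cup\{j\}) = u(S\cup\{i\})-u(S)$ if $j=i$ and $0$ if $j\ne i$. $P_w$ is the $\langle\cdot,\cdot\rangle_w$-orthogonal projection of $\ell^2_w(E)$ onto $\mathcal{R}(\mathrm{d})$.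 For a permutation $\sigma$ of $N$, $(\sigma^*w)(S,S\cup\{i\}) = w(\sigma(S),\sigma(S)\cup\{\sigma(i)\})$. *)

(* Defs.v *)
From HB Require Import structures.
From mathcomp Require Import all_boot all_order all_algebra.
From mathcomp Require Import perm.
Set Implicit Arguments. Unset Strict Implicit. Unset Printing Implicit Defensive.
Import Order.TTheory GRing.Theory Num.Theory.
Local Open Scope ring_scope.

(* Players: a finite type T; N = [set: T].  Vertices V = {set T}.
   An oriented edge (S, S ∪ {i}) with i ∉ S is encoded as the pair (S, i).
   Functions on E are functions f : {set T} -> T -> R, only their values on
   edges (i \notin S) matter. *)

Section Hypercube.
Variables (R : realFieldType) (T : finType).

Definition edge_fun := {set T} -> T -> R.

Definition dgrad (u : {set T} -> R) : edge_fun :=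
  fun S i => u (S :|: [set i]) - u S.

Definition dgrad_i (i : T) (u : {set T} -> R) : edge_fun :=
  fun S j => if j == i then u (S :|: [set i]) - u S else 0.

Definition edge_eq (f g : edge_fun) : Prop :=
  forall (S : {set T}) (j : T), j \notin S -> f S j = g S j.

Definition winner (w f g : edge_fun) : R :=
  \sum_(S : {set T}) \sum_(j : T | j \notin S) w S j * f S j * g S j.

Definition in_range_d (f : edge_fun) : Prop :=
  exists u : {set T} -> R, edge_eq f (dgrad u).

Definition is_proj_w (w f p : edge_fun) : Prop :=
  in_range_d p /\
  forall g, in_range_d g -> winner w (fun S j => f S j - p S j) g = 0.

Definition pos_weight (w : edge_fun) : Prop :=
  forall (S : {set T}) (j : T), j \notin S -> 0 < w S j.

Definition perm_invariant (w : edge_fun) : Prop :=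
  forall (s : {perm T}) (S : {set T}) (j : T), j \notin S -> w (s @: S) (s j) = w S j.

Definition is_viw (w : edge_fun) (v : {set T} -> R) (i : T)
  (u : {set T} -> R) : Prop :=
  u set0 = 0 /\ is_proj_w w (dgrad_i i v) (dgrad u).

Definition shapley (v : {set T} -> R) (i : T) : R :=
  \sum_(S : {set T} | i \notin S)
    ((#|S|`! * (#|T| - 1 - #|S|)`!)%:R / (#|T|`!)%:R) * (v (S :|: [set i]) - v S).

End Hypercube.

(* Main.v *)
Require Import Defs.
From HB Require Import structures.
From mathcomp Require Import all_boot all_order all_algebra.
From mathcomp Require Import perm zify ring.
Set Implicit Arguments. Unset Strict Implicit.
Import Order.TTheory GRing.Theory Num.Theory.
Local Open Scope ring_scope.

Lemma size_l (T : finType) (S : {set T}) (j : T) : j \notin S ->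
  size (enum S ++ j :: enum (~: (j |: S))) = #|T|.
Proof.
move=> hj; rewrite size_cat /= -!cardE.
rewrite -(cardsC (j |: S)) cardsU1 hj; simpl; lia.
Qed.

Lemma uniq_l (T : finType) (S : {set T}) (j : T) : j \notin S ->
  uniq (enum S ++ j :: enum (~: (j |: S))).
Proof.
move=> hj; rewrite cat_uniq enum_uniq /= enum_uniq andbT.
rewrite negb_or mem_enum hj /= mem_enum !inE eqxx /= andbT.
apply/hasPn => x; rewrite /= mem_enum !inE negb_or => /andP[_ hx].
by rewrite mem_enum.
Qed.

Lemma mem_l (T : finType) (S : {set T}) (j : T) (x : T) :
  x \in enum S ++ j :: enum (~: (j |: S)).
Proof.
rewrite mem_cat !inE !mem_enum !inE.
by case: (x \in S); case: (x == j); rewrite ?orbT.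
Qed.

Lemma wlev (R : realFieldType) (T : finType) (w : edge_fun R T)
  (hsym : perm_invariant w) (S S' : {set T}) (j j' : T) :
  j \notin S -> j' \notin S' -> #|S| = #|S'| -> w S j = w S' j'.
Proof.
move=> hj hj' hc.
set l1 := enum S ++ j :: enum (~: (j |: S)).
set l2 := enum S' ++ j' :: enum (~: (j' |: S')).
have sz : size l1 = size l2 by rewrite /l1 /l2 !size_l.
pose f x := nth x l2 (index x l1).
have finj : injective f.
  move=> x y; rewrite /f.
  have hx : (index x l1 < size l2)%N by rewrite -sz index_mem mem_l.
  have hy : (index y l1 < size l2)%N by rewrite -sz index_mem mem_l.
  rewrite (set_nth_default x y hy) => e.
  have := uniqP x (@uniq_l _ _ _ hj') (index x l1) (index y l1) hx hy e.
  move=> e2; by rewrite -(nth_index x (@mem_l _ S j x)) e2 nth_index // mem_l.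
pose p := perm finj.
have pj : p j = j'.
  rewrite permE /f /l1 index_pivot; last by rewrite mem_enum.
  by rewrite /l2 nth_cat -!cardE hc ltnn subnn.
have pS : p @: S = S'.
  apply/eqP; rewrite eqEcard card_imset ?hc ?leqnn ?andbT; last exact: perm_inj.
  apply/subsetP => y /imsetP [x hx ->].
  rewrite permE /f /l1 index_cat mem_enum hx /l2 nth_cat.
  have hi : (index x (enum S) < size (enum S'))%N by rewrite -!cardE -hc cardE index_mem mem_enum.
  by rewrite hi -(mem_enum (mem S')) mem_nth.
by rewrite -(hsym p S j hj) pS pj.
Qed.
Definition mco (R : realFieldType) (T : finType) (k : nat) : R :=
  ((k`! * (#|T| - 1 - k)`!)%:R / (#|T|`!)%:R).

Lemma coef_lem (R : realFieldType) (T : finType) (s : nat) :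
  (0 < #|T|)%N -> (s <= #|T|)%N ->
  s%:R * mco R T s.-1 - (#|T| - s)%:R * mco R T s =
  (s == #|T|)%:R - (s == 0)%:R.
Proof.
move=> n0 sn; rewrite /mco !mulrA -!natrM.
have F : (#|T|`!)%:R != 0 :> R by rewrite pnatr_eq0 -lt0n fact_gt0.
case: s sn => [|s] sn.
  have -> : (0 == #|T|) = false by apply/negbTE; rewrite eq_sym -lt0n.
  rewrite mul0n subn0 fact0 mul1n /=.
  case: #|T| n0 F => // n _ F; rewrite subn1 /= subn0 -factS.
  by rewrite mulfV // mul0r sub0r.
rewrite /= subn1 /=.
case: (ltngtP s.+1 #|T|) => h; last first.
- rewrite h subnn mul0n.
  case: #|T| h F => // n [->] F; rewrite subnn fact0 muln1 -factS.
  by rewrite mul0r subr0 mulfV // subr0.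
- by move: sn; rewrite leqNgt h.
-
  have e1 : (s.+1 * (s`! * (#|T|.-1 - s)`!) = (#|T| - s.+1) * (s.+1`! * (#|T|.-1 - s.+1)`!))%N.
    have -> : (#|T|.-1 - s = (#|T|.-1 - s.+1).+1)%N by lia.
    have -> : (#|T| - s.+1 = (#|T|.-1 - s.+1).+1)%N by lia.
    rewrite !factS; lia.
  by rewrite e1 subrr subr0.
Qed.

Lemma sum_setT (R : realFieldType) (T : finType) (g : {set T} -> R) :
  \sum_(X : {set T}) ((#|X| == #|T|)%:R - (#|X| == 0)%:R) * g X = g setT - g set0.
Proof.
under eq_bigr do rewrite mulrBl.
rewrite sumrB (bigD1 setT) //= cardsT eqxx mul1r big1 ?addr0; last first.
  move=> X hX; case e: (#|X| == #|T|); last by rewrite mul0r.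
  by move: hX; rewrite eqEcard subsetT cardsT (eqP e) leqnn.
rewrite (bigD1 set0) //= cards0 eqxx mul1r big1 ?addr0 //.
move=> X hX; by rewrite cards_eq0 (negbTE hX) mul0r.
Qed.

Lemma tele (R : realFieldType) (T : finType) (g : {set T} -> R) :
  (0 < #|T|)%N ->
  \sum_(S : {set T}) \sum_(j : T | j \notin S) mco R T #|S| * (g (S :|: [set j]) - g S)
  = g setT - g set0.
Proof.
move=> n0.
have -> : \sum_(S : {set T}) \sum_(j : T | j \notin S) mco R T #|S| * (g (S :|: [set j]) - g S)
  = \sum_(S : {set T}) \sum_(j : T | j \notin S) mco R T #|S| * g (S :|: [set j])
  - \sum_(S : {set T}) \sum_(j : T | j \notin S) mco R T #|S| * g S.
  rewrite -sumrB; apply eq_bigr => S _; rewrite -sumrB; apply eq_bigr => j _.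
  by rewrite mulrBr.
have E1 : forall S : {set T}, \sum_(j : T | j \notin S) mco R T #|S| * g S
   = (#|T| - #|S|)%:R * mco R T #|S| * g S.
  move=> S; rewrite (eq_bigl (fun j => j \in ~: S)); last by move=> j; rewrite inE.
  by rewrite sumr_const [#|~: S|]cardsCs setCK -mulrA mulr_natl.
have E2 : forall j : T, \sum_(S : {set T} | j \notin S) mco R T #|S| * g (S :|: [set j])
   = \sum_(X : {set T} | j \in X) mco R T (#|X|.-1) * g X.
  move=> j; rewrite (reindex_onto (fun X => X :\ j) (fun S => S :|: [set j])) /=; last first.
    by move=> S hS; rewrite setUC setU1K.
  apply: eq_big.
    move=> X; rewrite !inE eqxx /= setUC.
    case hX: (j \in X); first by rewrite setD1K // eqxx.
    apply/negbTE; apply/eqP => e; by move: hX; rewrite -e !inE eqxx.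
  move=> X /andP[_ /eqP e]; rewrite e.
  have hj : j \in X by rewrite -e !inE eqxx orbT.
  by rewrite (cardsD1 j X) hj.
have E3 : \sum_(S : {set T}) \sum_(j : T | j \notin S) mco R T #|S| * g (S :|: [set j])
   = \sum_(X : {set T}) #|X|%:R * mco R T (#|X|.-1) * g X.
  rewrite (exchange_big_dep xpredT) //=.
  under eq_bigr do rewrite E2.
  rewrite (exchange_big_dep xpredT) //=; apply eq_bigr => X _.
  rewrite (eq_bigl (fun j => j \in X)) //.
  by rewrite sumr_const -mulrA mulr_natl.
under [X in _ - X]eq_bigr do rewrite E1.
rewrite E3 -sumrB -sum_setT; apply eq_bigr => X _.
by rewrite -mulrBl coef_lem // max_card.
Qed.

Lemma part2 (R : realFieldType) (T : finType) (w : edge_fun R T)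
  (hpos : pos_weight w) (hsym : perm_invariant w)
  (v : {set T} -> R) (i : T) (u : {set T} -> R) :
  is_viw w v i u -> u [set: T] = shapley v i.
Proof.
case=> hu0 [_ horth].
have n0 : (0 < #|T|)%N by apply/card_gt0P; exists i.
pose om k := if [pick p : {set T} * T | (p.2 \notin p.1) && (#|p.1| == k)] is Some p
             then w p.1 p.2 else 1.
have omE : forall (S : {set T}) (j : T), j \notin S -> om #|S| = w S j.
  move=> S j hj; rewrite /om; case: pickP => [p /andP[h1 /eqP h2]|h].
    exact: wlev.
  by move: (h (S, j)); rewrite /= hj eqxx.
pose h (S : {set T}) := \sum_(k < #|S|) mco R T k / om k.
have dh : forall (S : {set T}) (j : T), j \notin S -> h (S :|: [set j]) - h S = mco R T #|S| / w S j.
  move=> S j hj; rewrite /h (_ : #|S :|: [set j]| = #|S|.+1); last first.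
    by rewrite setUC cardsU1 hj.
  by rewrite big_ord_recr /= addrC addrK (omE S j hj).
have := horth (dgrad h) (ex_intro _ h (fun _ _ _ => erefl)).
rewrite /winner.
have -> : \sum_(S : {set T}) \sum_(j : T | j \notin S)
      w S j * (dgrad_i i v S j - dgrad u S j) * dgrad h S j
  = \sum_(S : {set T}) \sum_(j : T | j \notin S)
      (mco R T #|S| * dgrad_i i v S j - mco R T #|S| * (u (S :|: [set j]) - u S)).
  apply eq_bigr => S _; apply eq_bigr => j hj; rewrite /dgrad dh //.
  have := hpos S j hj => hw.
  field; exact: lt0r_neq0.
move=> H.
rewrite (eq_bigr (fun S : {set T} =>
   \sum_(j : T | j \notin S) mco R T #|S| * dgrad_i i v S j -
   \sum_(j : T | j \notin S) mco R T #|S| * (u (S :|: [set j]) - u S))) in H;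
  last by move=> S _; rewrite sumrB.
move: H; rewrite sumrB tele // hu0 subr0 => /eqP; rewrite subr_eq0 => /eqP <-.
rewrite /shapley [RHS]big_mkcond; apply eq_bigr => S _; case hi: (i \in S) => /=.
  apply big1 => j hj; rewrite /dgrad_i; case: eqP => [e|]; last by rewrite mulr0.
  by subst; rewrite hi in hj.
rewrite (bigD1 i) ?hi //= big1 ?addr0; first by rewrite /dgrad_i eqxx.
by move=> j /andP[_ hj]; rewrite /dgrad_i (negbTE hj) mulr0.
Qed.

Definition dl (R : realFieldType) (T : finType) (Y : {set T}) : {set T} -> R :=
  fun X => (X == Y)%:R.
Arguments dl R {T} Y.

Lemma delta_sum (R : realFieldType) (T : finType) (u : {set T} -> R) (X : {set T}) :
  u X = \sum_(k < #|{set T}|) u (enum_val k) * dl R (enum_val k) X.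
Proof.
rewrite (bigD1 (enum_rank X)) //= enum_rankK /dl eqxx mulr1 big1 ?addr0 //.
move=> k hk; rewrite (_ : (X == enum_val k) = false) ?mulr0 //.
apply/negbTE; apply: contra hk => /eqP ->; by rewrite enum_valK.
Qed.

Lemma winner_lin2 (R : realFieldType) (T : finType) (w f : edge_fun R T) (g : {set T} -> R) :
  winner w f (dgrad g) =
  \sum_(k < #|{set T}|) g (enum_val k) * winner w f (dgrad (dl R (enum_val k))).
Proof.
rewrite /winner.
transitivity (\sum_(S : {set T}) \sum_(j : T | j \notin S) \sum_(k < #|{set T}|)
   g (enum_val k) * (w S j * f S j * dgrad (dl R (enum_val k)) S j)).
  apply eq_bigr => S _; apply eq_bigr => j _.
  rewrite /dgrad [g (S :|: _)]delta_sum [g S]delta_sum -sumrB mulr_sumr.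
  apply eq_bigr => k _; ring.
under eq_bigr do rewrite exchange_big.
rewrite exchange_big; apply eq_bigr => k _; rewrite mulr_sumr; apply eq_bigr => S _.
by rewrite mulr_sumr.
Qed.

Definition Bil (R : realFieldType) (T : finType) (w : edge_fun R T) (u g : {set T} -> R) : R :=
  winner w (dgrad u) (dgrad g) + u set0 * g set0.
Arguments Bil {R T} w u g.

Lemma Bil_lin2 (R : realFieldType) (T : finType) (w : edge_fun R T) (u g : {set T} -> R) :
  Bil w u g = \sum_(k < #|{set T}|) g (enum_val k) * Bil w u (dl R (enum_val k)).
Proof.
rewrite /Bil winner_lin2 [g set0]delta_sum mulr_sumr -big_split; apply eq_bigr => k _ /=.
ring.
Qed.

Lemma Bil_sym (R : realFieldType) (T : finType) (w : edge_fun R T) (u g : {set T} -> R) :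
  Bil w u g = Bil w g u.
Proof.
rewrite /Bil /winner [u set0 * _]mulrC; congr (_ + _).
apply eq_bigr => S _; apply eq_bigr => j _; ring.
Qed.

Lemma Bil_self0 (R : realFieldType) (T : finType) (w : edge_fun R T) (u : {set T} -> R) :
  pos_weight w -> Bil w u u = 0 ->
  u set0 = 0 /\ forall (S : {set T}) (j : T), j \notin S -> u (S :|: [set j]) = u S.
Proof.
move=> hpos; rewrite /Bil /winner.
have hterm : forall (S : {set T}) (j : T), j \notin S -> 0 <= w S j * dgrad u S j * dgrad u S j.
  move=> S j hj; rewrite -mulrA -expr2 mulr_ge0 ?sqr_ge0 //; exact: (ltW (hpos S j hj)).
have hin : forall X : {set T}, 0 <= \sum_(j : T | j \notin X) w X j * dgrad u X j * dgrad u X j.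
  move=> X; apply: sumr_ge0 => j hj; exact: hterm.
move/eqP; rewrite paddr_eq0; last by rewrite -expr2 sqr_ge0. 2:{ exact: sumr_ge0. }
case/andP => /eqP hs; rewrite mulf_eq0 orbb => /eqP h0; split => // S j hj.
have := @psumr_eq0P _ _ _ _ (fun X _ => hin X) hs S isT.
move/(@psumr_eq0P _ _ _ _ (fun j hj => hterm S j hj))/(_ j hj)/eqP.
rewrite -mulrA mulf_eq0 mulf_eq0 orbb (negbTE (lt0r_neq0 (hpos S j hj))) /=.
by rewrite /dgrad subr_eq0 => /eqP.
Qed.

Lemma conn (R : realFieldType) (T : finType) (u : {set T} -> R) :
  u set0 = 0 -> (forall (S : {set T}) (j : T), j \notin S -> u (S :|: [set j]) = u S) ->
  forall S, u S = 0.
Proof.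
move=> h0 hs.
suff H : forall n (S : {set T}), #|S| = n -> u S = 0 by move=> S; exact: H.
elim=> [|n IH] S hS.
  by move/eqP: hS; rewrite cards_eq0 => /eqP ->.
have [j hj] : exists j, j \in S by apply/set0Pn; rewrite -cards_eq0 hS.
rewrite -(setD1K hj) setUC hs ?setD11 //; apply: IH.
by move: hS; rewrite (cardsD1 j S) hj add1n => [[]].
Qed.

Definition Amx (R : realFieldType) (T : finType) (w : edge_fun R T) : 'M[R]_#|{set T}| :=
  \matrix_(k, l) Bil w (dl R (enum_val k)) (dl R (enum_val l)).
Arguments Amx {R T} w.

Definition toF (R : realFieldType) (T : finType) (x : 'rV[R]_#|{set T}|) : {set T} -> R :=
  fun S => x 0 (enum_rank S).
Arguments toF {R T} x.

Lemma xA (R : realFieldType) (T : finType) (w : edge_fun R T) (x : 'rV[R]_#|{set T}|) l :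
  (x *m Amx w) 0 l = Bil w (toF x) (dl R (enum_val l)).
Proof.
rewrite mxE Bil_sym Bil_lin2; apply eq_bigr => k _.
by rewrite /toF enum_valK mxE Bil_sym.
Qed.

Lemma Aunit (R : realFieldType) (T : finType) (w : edge_fun R T) :
  pos_weight w -> Amx w \in unitmx.
Proof.
move=> hpos.
suff H : forall x : 'rV[R]_#|{set T}|, x *m Amx w = 0 -> x = 0.
  rewrite -row_free_unit -kermx_eq0; apply/eqP/row_matrixP => r.
  by rewrite row0; apply: H; rewrite -row_mul mulmx_ker row0.
move=> x hx.
have hB : Bil w (toF x) (toF x) = 0.
  rewrite Bil_lin2 big1 // => l _; by rewrite -xA hx mxE mulr0.
have [h0 hs] := Bil_self0 hpos hB.
have c := conn h0 hs.
apply/rowP => k; rewrite mxE; have := c (enum_val k); by rewrite /toF enum_valK.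
Qed.

Lemma part1 (R : realFieldType) (T : finType) (w : edge_fun R T)
  (hpos : pos_weight w) (v : {set T} -> R) (i : T) :
  exists u : {set T} -> R, is_viw w v i u.
Proof.
pose b := \row_(l < #|{set T}|) winner w (dgrad_i i v) (dgrad (dl R (enum_val l))).
pose x := b *m invmx (Amx w).
have hx : x *m Amx w = b by rewrite mulmxKV // Aunit.
pose u := toF x.
have hB : forall g, Bil w u g = winner w (dgrad_i i v) (dgrad g).
  move=> g; rewrite Bil_lin2 winner_lin2; apply eq_bigr => l _.
  by rewrite -xA hx mxE.
have h0 : u set0 = 0.
  have := hB (fun _ => 1).
  have wc : forall f : edge_fun R T, winner w f (dgrad (fun _ => 1)) = 0.
    move=> f; rewrite /winner big1 // => S _; rewrite big1 // => j _.
    by rewrite /dgrad subrr mulr0.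
  by rewrite /Bil !wc add0r mulr1.
exists u; split => //; split; first by exists u => S j _.
move=> g [h' hg].
transitivity (winner w (fun S j => dgrad_i i v S j - dgrad u S j) (dgrad h')).
  rewrite /winner; apply eq_bigr => S _; apply eq_bigr => j hj; by rewrite hg.
have -> : winner w (fun S j => dgrad_i i v S j - dgrad u S j) (dgrad h')
   = winner w (dgrad_i i v) (dgrad h') - winner w (dgrad u) (dgrad h').
  rewrite /winner -sumrB; apply eq_bigr => S _; rewrite -sumrB; apply eq_bigr => j _.
  ring.
by rewrite -hB /Bil h0 mul0r addr0 subrr.
Qed.

Unset Implicit Arguments.
Set Strict Implicit.

Theorem corollary4p2 (R : realFieldType) (T : finType) (w : edge_fun R T)
  (hpos : pos_weight w) (hsym : perm_invariant w)
  (v : {set T} -> R) (hv : v set0 = 0) (i : T) :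
  (exists u : {set T} -> R, is_viw w v i u) /\
  (forall u : {set T} -> R, is_viw w v i u -> u [set: T] = shapley v i).
Proof.
split; first exact: part1.
move=> u hu; exact: (part2 hpos hsym hu).
Qed.
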